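(* Let $a\in\mathbb{F}$ be such that $\mathbb{F}$ has finite dimension as a right vector space over $K^{\sigma,\delta}_a$. Then for every $r\in\mathbb{Z}_+$ there exists a $(\sigma,\delta)$-multiplicity sequence $\mathbf a=(a_1,\dots,a_r)\in\mathbb{F}^r$ with $a_1=a$.
   Context: Let $\mathbb{F}$ be a division ring, $\sigma$ a ring endomorphism and $\delta$ a $\sigma$-derivation; $\mathbb{F}[x;\sigma,\delta]$ is the skew polynomial ring with $xa=\sigma(a)x+\delta(a)$. $K^{\sigma,\delta}_a=\{\beta\in\mathbb{F}:\sigma(\beta)a+\delta(\beta)=a\beta\}$ is the $(\sigma,\delta)$-centralizer of $a$, a division subring. For $\mathbf a=(a_1,\dots,a_r)$, $P_{\mathbf a}=(x-a_r)\cdots(x-a_1)$; $\mathbf a$ is a $(\sigma,\delta)$-multiplicity sequence if $a_1$ is the only $b\in\mathbb{F}$ such that $x-b$ divides $P_{\mathbf a}$ on the right. *)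

(* Defs.v *)
From HB Require Import structures.
From mathcomp Require Import all_boot all_order all_algebra.
Set Implicit Arguments. Unset Strict Implicit. Unset Printing Implicit Defensive.
Import GRing.Theory.
Local Open Scope ring_scope.

(* Skew polynomials F[x; sigma, delta] over a ring F are represented by their
   coefficient lists, i.e. by elements of {poly F} (sum_i p_i x^i, coefficients
   on the LEFT).  Only the additive structure of {poly F} is reused; the skew
   multiplication is defined below from the rule x a = sigma(a) x + delta(a). *)

Section Skew.
Variable F : unitRingType.
Variables (sigma delta : F -> F).

(* left multiplication by x:  x * (sum c_i x^i) = sum (sigma c_i x^(i+1) + delta c_i x^i) *)
Definition skew_mulX (q : {poly F}) : {poly F} :=
  'X * map_poly sigma q + map_poly delta q.

Definition skew_mul (p q : {poly F}) : {poly F} :=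
  \sum_(i < size p) (p`_i)%:P * iter i skew_mulX q.

Definition skew_rdvd (q p : {poly F}) : Prop :=
  exists Q : {poly F}, p = skew_mul Q q.

(* P_a = (x - a_r) ... (x - a_1) for a = [:: a_1; ...; a_r] *)
Definition skew_Pseq (s : seq F) : {poly F} :=
  foldl (fun P b => skew_mul ('X - b%:P) P) 1 s.

Definition multiplicity_seq (s : seq F) : Prop :=
  skew_rdvd ('X - (head 0 s)%:P) (skew_Pseq s) /\
  forall b : F, skew_rdvd ('X - b%:P) (skew_Pseq s) -> b = head 0 s.

Definition sd_centralizer (a beta : F) : Prop :=
  sigma beta * a + delta beta = a * beta.

Definition right_findim_over_centralizer (a : F) : Prop :=
  exists (n : nat) (e : 'I_n -> F),
    forall y : F, exists beta : 'I_n -> F,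
      (forall i, sd_centralizer a (beta i)) /\ y = \sum_(i < n) e i * beta i.
End Skew.

Definition division_ring (F : unitRingType) : Prop :=
  forall x : F, x != 0 -> x \is a GRing.unit.

Definition sigma_derivation (F : unitRingType) (sigma delta : F -> F) : Prop :=
  (forall x y, delta (x + y) = delta x + delta y) /\
  (forall x y, delta (x * y) = sigma x * delta y + delta x * y).

(* Main.v *)
Require Import Defs.
From HB Require Import structures.
From mathcomp Require Import all_boot all_order all_algebra.
From Stdlib Require Import Classical.
Set Implicit Arguments. Unset Strict Implicit. Unset Printing Implicit Defensive.
Import GRing.Theory.
Local Open Scope ring_scope.

Section LA.
Variable F : unitRingType.
Hypothesis hF : division_ring F.
Variable K : F -> Prop.
Hypothesis K0 : K 0.
Hypothesis K1 : K 1.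
Hypothesis KD : forall x y, K x -> K y -> K (x + y).
Hypothesis KN : forall x, K x -> K (- x).
Hypothesis KM : forall x y, K x -> K y -> K (x * y).
Hypothesis KV : forall x, K x -> x != 0 -> K x^-1.

Lemma KB x y : K x -> K y -> K (x - y).
Proof. by move=> *; apply: KD => //; apply: KN. Qed.
Lemma Ksum n (f : 'I_n -> F) : (forall i, K (f i)) -> K (\sum_i f i).
Proof. by move=> h; apply: (big_ind K) => // i _. Qed.

Definition in_span n (e : 'I_n -> F) y :=
  exists b : 'I_n -> F, (forall i, K (b i)) /\ y = \sum_i e i * b i.

Lemma cancelX (A B X : F) : (A + X) - (B + X) = A - B.
Proof. by rewrite opprD addrACA subrr addr0. Qed.

Lemma steinitz n : forall m (e : 'I_n -> F) (v : 'I_m -> F), (n < m)%N ->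
  (forall j, in_span e (v j)) ->
  exists b : 'I_m -> F, (forall j, K (b j)) /\ (exists j, b j != 0) /\
    \sum_j v j * b j = 0.
Proof.
elim: n => [|n IH] m e v hm hv.
  exists (fun _ => 1); split=> //; split; first by exists (Ordinal hm); exact: oner_neq0.
  by apply: big1 => j _; have [b [_ ->]] := hv j; rewrite big_ord0 mul0r.
have [g hg] := fin_all_exists hv.
case: (boolP [exists j, g j ord_max != 0]).
  move/existsP=> [j0 hj0].
  case: m hm v hv g hg j0 hj0 => // m hm v hv g hg j0 hj0.
  set c := g j0 ord_max.
  have cu : c \is a GRing.unit := hF hj0.
  have Kc : K c^-1 by apply: KV => //; exact: (hg j0).1.
  pose w k := v (lift j0 k) - v j0 * (c^-1 * g (lift j0 k) ord_max).
  have hw : forall k, in_span (fun i : 'I_n => e (widen_ord (leqnSn n) i)) (w k).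
    move=> k; exists (fun i => g (lift j0 k) (widen_ord (leqnSn n) i)
       - g j0 (widen_ord (leqnSn n) i) * (c^-1 * g (lift j0 k) ord_max)).
    split.
      move=> i; apply: KB; first exact: (hg _).1.
      by apply: KM; [exact: (hg _).1|apply: KM => //; exact: (hg _).1].
    rewrite /w (hg (lift j0 k)).2 (hg j0).2 !big_ord_recr /=.
    rewrite mulrDl -/c [e ord_max * c * _]mulrA.
    rewrite (mulrK cu) cancelX.
    rewrite mulr_suml -sumrB; apply: eq_bigr => i _.
    by rewrite mulrBr !mulrA.
  have [b [Kb [[k hk] hs]]] := IH m _ w hm hw.
  exists (fun j => if unlift j0 j is Some k then b k
            else - \sum_k c^-1 * g (lift j0 k) ord_max * b k).
  split.
    move=> j; case: (unlift j0 j) => [k'|]; first exact: Kb.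
    apply: KN; apply: Ksum => k'; apply: KM => //; apply: KM => //; exact: (hg _).1.
  split; first by exists (lift j0 k); rewrite liftK.
  rewrite (bigD1_ord j0) //= unlift_none.
  rewrite [X in _ + X](eq_bigr (fun i : 'I_m => v (lift j0 i) * b i)); last by move=> i _; rewrite liftK.
  rewrite -[RHS]hs /w.
  under [RHS]eq_bigr => k' _ do rewrite mulrBl.
  rewrite sumrB mulrN mulr_sumr addrC; congr (_ - _).
  by apply: eq_bigr => k' _; rewrite !mulrA.
move/existsPn=> h0.
have := IH m (fun i : 'I_n => e (widen_ord (leqnSn n) i)) v (ltnW hm).
apply=> j; exists (fun i => g j (widen_ord (leqnSn n) i)); split.
  by move=> i; exact: (hg j).1.
rewrite (hg j).2 big_ord_recr /=.
by move: (h0 j); rewrite negbK => /eqP ->; rewrite mulr0 addr0.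
Qed.

Definition spans n (e : 'I_n -> F) := forall y, in_span e y.

Lemma drop_dep n (e : 'I_n.+1 -> F) (b : 'I_n.+1 -> F) j0 :
  spans e -> (forall j, K (b j)) -> b j0 != 0 -> \sum_j e j * b j = 0 ->
  spans (fun k : 'I_n => e (lift j0 k)).
Proof.
move=> hsp Kb hj0 hsum y.
have bu : b j0 \is a GRing.unit := hF hj0.
have [g [Kg hy]] := hsp y.
pose S := \sum_(k < n) e (lift j0 k) * b (lift j0 k).
have he : e j0 = - S * (b j0)^-1.
  move: hsum; rewrite (bigD1_ord j0) //= -/S => /eqP; rewrite addr_eq0 => /eqP <-.
  by rewrite mulrK.
exists (fun k => g (lift j0 k) - b (lift j0 k) * ((b j0)^-1 * g j0)); split.
  move=> k; apply: KB; first exact: Kg.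
  apply: KM; first exact: Kb. apply: KM; [exact: KV|exact: Kg].
rewrite hy (bigD1_ord j0) //= he /S !mulNr !mulr_suml -sumrN.
rewrite -big_split /=; apply: eq_bigr => k _.
by rewrite mulrBr addrC !mulrA.
Qed.

Lemma no_surj n (e : 'I_n -> F) (L : F -> F) :
  spans e ->
  (forall x y, L (x + y) = L x + L y) ->
  (forall x b, K b -> L (x * b) = L x * b) ->
  L 1 = 0 -> (forall g, exists d, L d = g) -> False.
Proof.
move=> + LD LK L1 surj.
have L0 : L 0 = 0 by apply: (addrI (L 0)); rewrite -LD !addr0.
elim: n e => [|n IH] e hsp.
  have [b [_ h]] := hsp 1; rewrite big_ord0 in h.
  by move/eqP: h; rewrite oner_eq0.
have [f hf] := fin_all_exists (fun i => surj (e i)).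
pose v (j : 'I_n.+2) := if unlift ord0 j is Some i then f i else 1.
have [b [Kb [[j hj] hs]]] := steinitz (ltnSn n.+1) (fun j => hsp (v j)).
have hL : \sum_i e i * b (lift ord0 i) = 0.
  have := congr1 L hs; rewrite L0 (big_morph L LD L0).
  rewrite (bigD1_ord ord0) //= LK // /v unlift_none L1 mul0r add0r.
  by under eq_bigr => i _ do rewrite liftK LK // hf.
case: (boolP [exists i, b (lift ord0 i) != 0]).
  move/existsP=> [i hi].
  apply: (IH _ (drop_dep hsp (fun i => Kb (lift ord0 i)) hi hL)).
move/existsPn=> h0.
have hb0 : forall i, b (lift ord0 i) = 0 by move=> i; move: (h0 i); rewrite negbK => /eqP.
move: hs; rewrite (bigD1_ord ord0) //= /v unlift_none mul1r big1; last first.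
  by move=> i _; rewrite hb0 mulr0.
rewrite addr0 => hb.
by case: (unliftP ord0 j) hj => [i ->|->]; rewrite ?hb0 ?hb eqxx.
Qed.
End LA.

Section SkewAct.
Variable F : unitRingType.
Variable sigma : {rmorphism F -> F}.
Variable delta : F -> F.
Hypothesis hdD : forall x y, delta (x + y) = delta x + delta y.
Hypothesis hdM : forall x y, delta (x * y) = sigma x * delta y + delta x * y.

Lemma d0 : delta 0 = 0.
Proof. by apply: (addrI (delta 0)); rewrite -hdD !addr0. Qed.
Lemma dN x : delta (- x) = - delta x.
Proof. by apply: (addrI (delta x)); rewrite -hdD !subrr d0. Qed.
Lemma d1 : delta 1 = 0.
Proof. have := hdM 1 1; rewrite mulr1 rmorph1 mul1r mulr1 => h.
by apply: (addrI (delta 1)); rewrite addr0 -h. Qed.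

Definition T b y := sigma y * b + delta y.
Lemma TD b y z : T b (y + z) = T b y + T b z.
Proof. by rewrite /T rmorphD hdD mulrDl addrACA. Qed.
Lemma T0 b : T b 0 = 0.
Proof. by rewrite /T rmorph0 mul0r d0 addr0. Qed.
Lemma TM b c y : T b (c * y) = sigma c * T b y + delta c * y.
Proof. by rewrite /T rmorphM hdM mulrDr !mulrA addrA. Qed.
Lemma T1 b : T b 1 = b.
Proof. by rewrite /T rmorph1 mul1r d1 addr0. Qed.
Lemma iterT0 b i : iter i (T b) 0 = 0.
Proof. by elim: i => //= i ->; rewrite T0. Qed.
Lemma iterTD b i y z : iter i (T b) (y + z) = iter i (T b) y + iter i (T b) z.
Proof. by elim: i => //= i ->; rewrite TD. Qed.

Definition act b (p : {poly F}) y := \sum_(i < size p) p`_i * iter i (T b) y.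

Lemma act_widen b (p : {poly F}) y n : (size p <= n)%N ->
  act b p y = \sum_(i < n) p`_i * iter i (T b) y.
Proof.
move=> h; rewrite /act (big_ord_widen n (fun i => p`_i * iter i (T b) y) h) big_mkcond.
apply: eq_bigr => i _; case: ltnP => // hi; by rewrite nth_default // mul0r.
Qed.

Lemma actD b p q y : act b (p + q) y = act b p y + act b q y.
Proof.
set n := maxn (size p) (size q).
rewrite (@act_widen b _ _ n) ?(leq_trans (size_polyD _ _)) //.
rewrite (@act_widen b p _ n) ?leq_maxl // (@act_widen b q _ n) ?leq_maxr //.
by rewrite -big_split; apply: eq_bigr => i _; rewrite coefD mulrDl.
Qed.
Lemma act0 b y : act b 0 y = 0.
Proof. by rewrite /act size_poly0 big_ord0. Qed.
Lemma actN b p y : act b (- p) y = - act b p y.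
Proof. by apply: (addrI (act b p y)); rewrite -actD !subrr act0. Qed.
Lemma actC b c y : act b c%:P y = c * y.
Proof. by rewrite (@act_widen b _ _ 1) ?size_polyC_leq1 // big_ord1 coefC. Qed.
Lemma actX b y : act b 'X y = T b y.
Proof.
rewrite (@act_widen b _ _ 2) ?size_polyX // big_ord_recr big_ord1 /= !coefX /=.
by rewrite mul0r add0r mul1r.
Qed.
Lemma actCM b c p y : act b (c%:P * p) y = c * act b p y.
Proof.
rewrite (@act_widen b _ _ (size p)); last first.
  by apply/leq_sizeP => j hj; rewrite coefCM nth_default // mulr0.
by rewrite /act mulr_sumr; apply: eq_bigr => i _; rewrite coefCM mulrA.
Qed.
Lemma act_sum b n (P : 'I_n -> {poly F}) y :
  act b (\sum_(i < n) P i) y = \sum_(i < n) act b (P i) y.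
Proof. by apply: (big_morph (fun p => act b p y)) => [p q|]; rewrite ?actD ?act0. Qed.

Lemma coef_mapd (p : {poly F}) i : (map_poly delta p)`_i = delta p`_i.
Proof. exact: coef_map_id0 _ _ d0. Qed.

Lemma coef_mulX (q : {poly F}) i : (skew_mulX sigma delta q)`_i =
  (if i == 0%N then 0 else sigma q`_i.-1) + delta q`_i.
Proof. by rewrite /skew_mulX coefD coefXM coef_map coef_mapd. Qed.

Lemma act_mulX b q y : act b (skew_mulX sigma delta q) y = T b (act b q y).
Proof.
set n := size q.
rewrite (@act_widen b _ _ n.+1); last first.
  apply/leq_sizeP => j hj; rewrite coef_mulX.
  rewrite [q`_j]nth_default ?d0 ?addr0 ?(ltnW hj) //; case: j hj => // j hj /=.
  by rewrite nth_default ?rmorph0.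
rewrite /act (big_morph (T b) (TD b) (T0 b)).
rewrite (eq_bigr (fun i : 'I_n.+1 => (if i == 0%N :> nat then 0 else sigma q`_i.-1) * iter i (T b) y + delta q`_i * iter i (T b) y)); last by move=> i _; rewrite coef_mulX mulrDl.
rewrite big_split /= big_ord_recl /= mul0r add0r big_ord_recr /= nth_default // d0 mul0r addr0.
rewrite -big_split /=; apply: eq_bigr => i _.
by rewrite TM.
Qed.

Lemma act_iter b i q y :
  act b (iter i (skew_mulX sigma delta) q) y = iter i (T b) (act b q y).
Proof. by elim: i => //= i IH; rewrite act_mulX IH. Qed.

Lemma act_mul b p q y : act b (skew_mul sigma delta p q) y = act b p (act b q y).
Proof.
rewrite /skew_mul act_sum; apply: eq_bigr => i _.
by rewrite actCM act_iter.
Qed.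

Lemma act_y0 b p : act b p 0 = 0.
Proof. by rewrite /act big1 // => i _; rewrite iterT0 mulr0. Qed.
Lemma act_yD b p y z : act b p (y + z) = act b p y + act b p z.
Proof. by rewrite /act -big_split; apply: eq_bigr => i _; rewrite iterTD mulrDr. Qed.
Lemma act1 b y : act b 1 y = y.
Proof. by rewrite -polyC1 actC mul1r. Qed.
Lemma actXsubC b c y : act b ('X - c%:P) y = T b y - c * y.
Proof. by rewrite actD actN actX actC. Qed.

Notation smul := (skew_mul sigma delta).
Notation smulX := (skew_mulX sigma delta).

Lemma smul_widen (p q : {poly F}) n : (size p <= n)%N ->
  smul p q = \sum_(i < n) (p`_i)%:P * iter i smulX q.
Proof.
move=> h; rewrite /skew_mul (big_ord_widen n (fun i => (p`_i)%:P * iter i smulX q) h) big_mkcond.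
apply: eq_bigr => i _; case: ltnP => // hi; by rewrite nth_default // mul0r.
Qed.

Lemma smulDl p q r : smul (p + q) r = smul p r + smul q r.
Proof.
set n := maxn (size p) (size q).
rewrite (@smul_widen _ _ n) ?(leq_trans (size_polyD _ _)) //.
rewrite (@smul_widen p _ n) ?leq_maxl // (@smul_widen q _ n) ?leq_maxr //.
by rewrite -big_split; apply: eq_bigr => i _; rewrite coefD polyCD mulrDl.
Qed.
Lemma smul0 r : smul 0 r = 0.
Proof. by rewrite /skew_mul size_poly0 big_ord0. Qed.

Lemma smul_mono c k r : smul (c%:P * 'X^k) r = c%:P * iter k smulX r.
Proof.
rewrite (@smul_widen _ _ k.+1); last first.
  apply/leq_sizeP => j hj; rewrite coefCM coefXn.
  by case: eqP hj => [->|]; rewrite ?ltnn ?mulr0.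
rewrite big_ord_recr /= coefCM coefXn eqxx mulr1 big1 ?add0r // => i _.
by rewrite coefCM coefXn (ltn_eqF (ltn_ord i)) mulr0 mul0r.
Qed.

Lemma iter_mulX_lead (r : {poly F}) m k : (size r <= m.+1)%N -> r`_m = 1 ->
  (size (iter k smulX r) <= (m + k).+1)%N /\ (iter k smulX r)`_(m + k) = 1.
Proof.
move=> hs hc; elim: k => [|k [IHs IHc]] /=; first by rewrite addn0.
split.
  apply/leq_sizeP => j hj; rewrite coef_mulX.
  rewrite [_`_j]nth_default ?d0 ?addr0; last by apply: leq_trans IHs _; rewrite addnS in hj; apply: ltnW.
  case: j hj => // j hj /=; rewrite nth_default ?rmorph0 //.
  by apply: leq_trans IHs _; rewrite addnS in hj.
rewrite coef_mulX addnS /= IHc rmorph1 nth_default ?d0 ?addr0 //.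
Qed.

Lemma div_exists b n : forall p : {poly F}, (size p <= n.+1)%N ->
  exists Q c, p = smul Q ('X - b%:P) + c%:P.
Proof.
elim: n => [|n IH] p hp.
  exists 0, p`_0; rewrite smul0 add0r; exact: size1_polyC.
set c := p`_n.+1.
have hr : (size ('X - b%:P)%R <= 1.+1)%N by rewrite size_XsubC.
have hr1 : ('X - b%:P)`_1 = 1 by rewrite coefB coefX coefC subr0.
have [hs hc] := iter_mulX_lead n hr hr1.
rewrite add1n in hs hc.
have hp' : (size (p - c%:P * iter n smulX ('X - b%:P))%R <= n.+1)%N.
  apply/leq_sizeP => j hj; rewrite coefB coefCM.
  move: hj; rewrite leq_eqVlt => /orP [/eqP <-|hj].
    by rewrite hc mulr1 subrr.
  rewrite !nth_default ?mulr0 ?subrr //; first exact: leq_trans hs hj.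
  exact: leq_trans hp hj.
have [Q [d hQ]] := IH _ hp'.
exists (c%:P * 'X^n + Q), d.
rewrite smulDl smul_mono -addrA -hQ.
by rewrite addrC subrK.
Qed.

Lemma rdvd_act b p : skew_rdvd sigma delta ('X - b%:P) p <-> act b p 1 = 0.
Proof.
split.
  by move=> [Q ->]; rewrite act_mul actXsubC T1 mulr1 subrr act_y0.
move=> h; have [Q [c hQ]] := @div_exists b (size p) p (leqnSn _).
exists Q; move: h; rewrite {1}hQ actD act_mul actXsubC T1 mulr1 subrr act_y0 add0r actC mulr1.
by move=> hc; rewrite hQ hc addr0.
Qed.

Lemma Pseq_rcons s x : skew_Pseq sigma delta (rcons s x) = smul ('X - x%:P) (skew_Pseq sigma delta s).
Proof. by rewrite /skew_Pseq foldl_rcons. Qed.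

Hypothesis hF : division_ring F.
Variable a : F.
Hypothesis hfin : right_findim_over_centralizer sigma delta a.

Local Notation Kc := (sd_centralizer sigma delta a).

Lemma Kc0 : Kc 0.
Proof. by rewrite /sd_centralizer rmorph0 mul0r d0 addr0 mulr0. Qed.
Lemma Kc1 : Kc 1.
Proof. by rewrite /sd_centralizer rmorph1 mul1r d1 addr0 mulr1. Qed.
Lemma KcD x y : Kc x -> Kc y -> Kc (x + y).
Proof.
rewrite /sd_centralizer => hx hy.
by rewrite rmorphD hdD mulrDl addrACA hx hy mulrDr.
Qed.
Lemma KcN x : Kc x -> Kc (- x).
Proof. rewrite /sd_centralizer => hx. by rewrite rmorphN dN mulNr -opprD hx mulrN. Qed.
Lemma KcM x y : Kc x -> Kc y -> Kc (x * y).
Proof.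
rewrite /sd_centralizer => hx hy.
rewrite rmorphM hdM -mulrA addrA -mulrDr hy mulrA -mulrDl hx mulrA //.
Qed.
Lemma KcV x : Kc x -> x != 0 -> Kc x^-1.
Proof.
rewrite /sd_centralizer => hx nx.
have xu : x \is a GRing.unit := hF nx.
have sxu : sigma x \is a GRing.unit by rewrite rmorph_unit.
apply: (mulrI sxu).
have h0 : sigma x * delta x^-1 = - (delta x * x^-1).
  have := hdM x x^-1; rewrite mulrV // d1 => /eqP; rewrite eq_sym addr_eq0 => /eqP //.
have hx' : sigma x * a = a * x - delta x by rewrite -hx addrK.
rewrite mulrDr mulrA -rmorphM mulrV // rmorph1 mul1r h0 mulrA hx' mulrBl mulrK //.
Qed.

Lemma TK z b : Kc b -> T a (z * b) = T a z * b.
Proof.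
rewrite /sd_centralizer => hb; rewrite /T rmorphM hdM -mulrA addrA -mulrDr hb.
by rewrite mulrA -mulrDl.
Qed.

Lemma actK p y b : Kc b -> act a p (y * b) = act a p y * b.
Proof.
move=> hb; rewrite /act mulr_suml.
have hit : forall j, iter j (T a) (y * b) = iter j (T a) y * b.
  by elim=> //= j ->; rewrite TK.
by apply: eq_bigr => i _; rewrite hit mulrA.
Qed.

Definition cnj c u := T c u * u^-1.

Lemma TS c u y : u \is a GRing.unit -> T (cnj c u) y = T c (y * u) * u^-1.
Proof.
move=> uu; rewrite TM mulrDl mulrK // /cnj /T mulrA //.
Qed.

Lemma act_shift c u p y : u \is a GRing.unit ->
  act (cnj c u) p y = act c p (y * u) * u^-1.
Proof.
move=> uu; rewrite /act mulr_suml.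
have hit : forall j, iter j (T (cnj c u)) y = iter j (T c) (y * u) * u^-1.
  elim=> [|j IH] /=; first by rewrite mulrK.
  by rewrite IH TS // divrK.
by apply: eq_bigr => i _; rewrite hit mulrA.
Qed.

Lemma main_ind k : exists s, size s = k.+1 /\ head 0 s = a /\
  (forall b, act b (skew_Pseq sigma delta s) 1 = 0 <-> b = a).
Proof.
elim: k => [|k [s [hs [hh hr]]]].
  exists [:: a]; split=> //; split=> // b.
  rewrite /skew_Pseq /= act_mul act1 actXsubC T1 mulr1.
  split=> [h|->]; last by rewrite subrr.
  by apply/eqP; rewrite -subr_eq0; apply/eqP.
set P := skew_Pseq sigma delta s.
have [g hg] : exists g, forall d, act a P d <> g.
  case: (classic (exists g, forall d, act a P d <> g)) => // hn.
  exfalso; case: hfin => n [e he].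
  apply: (@no_surj F hF Kc Kc0 Kc1 KcD KcN KcM KcV n e (act a P)).
  - exact: he.
  - exact: act_yD.
  - move=> x b hb; exact: actK.
  - by apply/hr.
  move=> g; apply: NNPP => hng; apply: hn; exists g => d hd; apply: hng; by exists d.
have gu : g \is a GRing.unit.
  apply: hF; apply/eqP => g0; apply: (hg 0); by rewrite act_y0 g0.
exists (rcons s (cnj a g)); split; first by rewrite size_rcons hs.
split; first by case: s hs hh {hr P hg} => //.
move=> b; rewrite Pseq_rcons act_mul actXsubC -/P.
set c := act b P 1.
split; last first.
  by move=> eb; rewrite /c eb (proj2 (hr a) erefl) T0 mulr0 subr0.
move=> h.
have [c0|cn] := eqVneq c 0; first by apply/hr.
exfalso.
have cu : c \is a GRing.unit := hF cn.
have h' : T b c = cnj a g * c by apply/eqP; rewrite -subr_eq0 h.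
have ha' : cnj a g = cnj b c by rewrite /cnj h' mulrK.
have ciu : c^-1 \is a GRing.unit by rewrite unitrV.
have uu : c^-1 * g \is a GRing.unit by rewrite unitrMl.
have hb : b = cnj a (c^-1 * g).
  rewrite /cnj.
  have -> : T a (c^-1 * g) = T (cnj a g) c^-1 * g by rewrite TS // divrK.
  rewrite ha' TS // mulVr // T1 invrM // invrK !mulrA mulrK //.
  by rewrite -mulrA mulVr // mulr1.
apply: (hg (c^-1 * g)).
have : c = act a P (c^-1 * g) * (c^-1 * g)^-1.
  by rewrite {1}/c {1}hb act_shift // mul1r.
move=> hc.
have := congr1 (fun z => z * (c^-1 * g)) hc; rewrite /= divrK // => <-.
by rewrite mulVKr.
Qed.

End SkewAct.

Theorem mainTheorem14 (F : unitRingType) (sigma : {rmorphism F -> F})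
  (delta : F -> F) (hF : division_ring F)
  (hdelta : sigma_derivation sigma delta) (a : F)
  (hfin : right_findim_over_centralizer sigma delta a) :
  forall r : nat, (0 < r)%N ->
    exists s : seq F, size s = r /\ head 0 s = a /\
      multiplicity_seq sigma delta s.
Proof.
case: hdelta => hdD hdM.
move=> [|k] // _.
have [s [hs [hh hr]]] := main_ind hdD hdM hF hfin k.
exists s; split=> //; split=> //; split.
  by rewrite hh; apply/(rdvd_act hdD hdM); apply/hr.
by move=> b /(rdvd_act hdD hdM)/hr ->.
Qed.
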